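(* Let $T,Q,R$ be pairwise compatible tilings. Then $R$ is compatible with $T\cap Q$ and with $T\cup Q$, and $R\cap(T\cup Q)=(R\cap T)\cup(R\cap Q)$.
   Context: Fix an integer $n\ge 3$ and write $[n]=\{1,\dots,n\}$. Let $\Lambda$ be the set of 3-element subsets of $[n]$; a triple $\{i,j,k\}$ with $i<j<k$ is written $ijk$. For a 4-element subset $F=\{i<j<k<l\}$ of $[n]$, the stick of $F$ is the sequence $(ijk,\ ijl,\ ikl,\ jkl)$. A tiling (the inversion set of a rhombus tiling of the zonogon $Z(n;2)$) is a subset $T\subseteq\Lambda$ such that for every 4-element $F\subseteq[n]$, $T\cap\mathrm{stick}(F)$ is an initial segment or a final segment of the stick (empty set and whole stick allowed). Two tilings $T,T'$ are compatible if both $T\cap T'$ and $T\cup T'$ are tilings. *)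

(* Defs.v *)
From mathcomp Require Import all_boot all_order.
Set Implicit Arguments. Unset Strict Implicit. Unset Printing Implicit Defensive.

(* [n] = {1,...,n} is modelled by 'I_n = {0,...,n-1} (order-preserving shift). *)

Definition Lambda (n : nat) : {set {set 'I_n}} := [set A : {set 'I_n} | #|A| == 3].

Definition sorted_elems n (F : {set 'I_n}) : seq 'I_n :=
  sort (fun a b : 'I_n => (a <= b)%N) (enum F).

(* stick of F = {i<j<k<l}: (ijk, ijl, ikl, jkl) = (F\l, F\k, F\j, F\i). *)
Definition stick n (F : {set 'I_n}) : seq {set 'I_n} :=
  [seq F :\ x | x <- rev (sorted_elems F)].

Definition stick_meet n (T : {set {set 'I_n}}) (F : {set 'I_n}) : seq {set 'I_n} :=
  [seq S <- stick F | S \in T].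

Definition is_tiling n (T : {set {set 'I_n}}) : Prop :=
  T \subset Lambda n /\
  forall F : {set 'I_n}, #|F| = 4 ->
    exists m, stick_meet T F = take m (stick F) \/ stick_meet T F = drop m (stick F).

Definition compatible n (T T' : {set {set 'I_n}}) : Prop :=
  is_tiling (T :&: T') /\ is_tiling (T :|: T').

(* Main.v *)
Require Import Defs.
From mathcomp Require Import all_boot all_order.
Set Implicit Arguments. Unset Strict Implicit. Unset Printing Implicit Defensive.

Definition pats : seq (seq bool) :=
  [:: [:: false; false; false; false]; [:: true; false; false; false];
      [:: true; true; false; false]; [:: true; true; true; false];
      [:: true; true; true; true]; [:: false; true; true; true];
      [:: false; false; true; true]; [:: false; false; false; true]].

Definition segb (bs : seq bool) := bs \in pats.

Lemma segP (X : eqType) (s : seq X) (p : pred X) : size s = 4 -> uniq s ->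
  (exists m, filter p s = take m s \/ filter p s = drop m s) <-> segb (map p s).
Proof.
case: s => [|a [|b [|c [|d [|e s]]]]] //= _ Hu; split.
- case=> m; rewrite /=.
  case: (p a); case: (p b); case: (p c); case: (p d);
  case: m => [|[|[|[|m]]]] /= [] H //;
  case: H => *; subst; move: Hu; rewrite !inE !eqxx /= ?orbT ?andbF ?andbT //.
- rewrite /=. case: (p a); case: (p b); case: (p c); case: (p d) => //= _;
  first [ by exists 0; left | by exists 1; left | by exists 2; left | by exists 3; left
        | by exists 4; left | by exists 1; right | by exists 2; right | by exists 3; right].
Qed.

Definition bA (x y : seq bool) := [seq a.1 && a.2 | a <- zip x y].
Definition bO (x y : seq bool) := [seq a.1 || a.2 | a <- zip x y].

Definition Pb (t q r : seq bool) : bool :=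
  [==> segb (bA t q), segb (bO t q), segb (bA t r), segb (bO t r),
       segb (bA q r), segb (bO q r) =>
   [&& segb (bA r (bA t q)), segb (bO r (bA t q)), segb (bA r (bO t q)) &
       segb (bO r (bO t q))]].

Lemma brute_all : all (fun t => all (fun q => all (fun r => Pb t q r) pats) pats) pats.
Proof. by []. Qed.

Lemma brute t q r : segb t -> segb q -> segb r -> Pb t q r.
Proof.
move=> Ht Hq Hr.
by move/allP/(_ t Ht)/allP/(_ q Hq)/allP/(_ r Hr): brute_all.
Qed.

Lemma stick_props n (F : {set 'I_n}) : #|F| = 4 -> size (stick F) = 4 /\ uniq (stick F).
Proof.
move=> HF; rewrite /stick /sorted_elems; split.
  by rewrite size_map size_rev size_sort -cardE.
rewrite map_inj_in_uniq ?rev_uniq ?sort_uniq ?enum_uniq //.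
move=> x y; rewrite !mem_rev !mem_sort !mem_enum => Hx Hy Hxy.
apply/eqP; apply/negPn/negP => Hne.
have : x \in F :\ y by rewrite in_setD1 Hne.
by rewrite -Hxy in_setD1 eqxx.
Qed.

Definition seg n (X : {set {set 'I_n}}) (F : {set 'I_n}) :=
  exists m, stick_meet X F = take m (stick F) \/ stick_meet X F = drop m (stick F).

Lemma seg_bits n (X : {set {set 'I_n}}) (F : {set 'I_n}) : #|F| = 4 ->
  seg X F <-> segb [seq Y \in X | Y <- stick F].
Proof.
move=> HF; have [Hs Hu] := stick_props HF.
exact: (segP (fun Y => Y \in X) Hs Hu).
Qed.

Lemma key n (T Q R : {set {set 'I_n}}) (F : {set 'I_n}) : #|F| = 4 ->
  seg T F -> seg Q F -> seg R F ->
  seg (T :&: Q) F -> seg (T :|: Q) F -> seg (T :&: R) F -> seg (T :|: R) F ->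
  seg (Q :&: R) F -> seg (Q :|: R) F ->
  [/\ seg (R :&: (T :&: Q)) F, seg (R :|: (T :&: Q)) F,
      seg (R :&: (T :|: Q)) F & seg (R :|: (T :|: Q)) F].
Proof.
move=> HF.
move=> /(seg_bits _ HF) Ht /(seg_bits _ HF) Hq /(seg_bits _ HF) Hr /(seg_bits _ HF) H4
  /(seg_bits _ HF) H5 /(seg_bits _ HF) H6 /(seg_bits _ HF) H7 /(seg_bits _ HF) H8
  /(seg_bits _ HF) H9.
suff: [/\ segb [seq Y \in R :&: (T :&: Q) | Y <- stick F],
      segb [seq Y \in R :|: (T :&: Q) | Y <- stick F],
      segb [seq Y \in R :&: (T :|: Q) | Y <- stick F] &
      segb [seq Y \in R :|: (T :|: Q) | Y <- stick F]].
  by case=> *; split; apply/(seg_bits _ HF).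
have [Hs _] := stick_props HF.
move: Ht Hq Hr H4 H5 H6 H7 H8 H9 (brute Ht Hq Hr); move: Hs.
case: (stick F) => [|a [|b [|c [|d [|e s]]]]] //= _.
rewrite !inE => _ _ _ H4 H5 H6 H7 H8 H9.
rewrite /Pb /= H4 H5 H6 H7 H8 H9 /=.
by case/and4P.
Qed.

Lemma tiling_seg n (X : {set {set 'I_n}}) : is_tiling X -> forall F : {set 'I_n}, #|F| = 4 -> seg X F.
Proof. by case=> _ H F /H. Qed.

Theorem lemma1 (n : nat) (Hn : 3 <= n) (T Q R : {set {set 'I_n}}) :
  is_tiling T -> is_tiling Q -> is_tiling R ->
  compatible T Q -> compatible T R -> compatible Q R ->
  compatible R (T :&: Q) /\ compatible R (T :|: Q) /\
  R :&: (T :|: Q) = (R :&: T) :|: (R :&: Q).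
Proof.
move=> tT tQ tR [tTQi tTQu] [tTRi tTRu] [tQRi tQRu].
have HR := tR.1; have HT := tT.1; have HQ := tQ.1.
have K := fun (F : {set 'I_n}) (HF : #|F| = 4) => key HF (tiling_seg tT HF) (tiling_seg tQ HF) (tiling_seg tR HF)
  (tiling_seg tTQi HF) (tiling_seg tTQu HF) (tiling_seg tTRi HF) (tiling_seg tTRu HF)
  (tiling_seg tQRi HF) (tiling_seg tQRu HF).
split; [|split]; last by rewrite setIUr.
- split; split.
  + exact: subset_trans (subsetIl _ _) HR.
  + by move=> F HF; have [] := K F HF.
  + by rewrite !subUset HR (subset_trans (subsetIl _ _) HT).
  + by move=> F HF; have [] := K F HF.
- split; split.
  + exact: subset_trans (subsetIl _ _) HR.
  + by move=> F HF; have [] := K F HF.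
  + by rewrite !subUset HR HT HQ.
  + by move=> F HF; have [] := K F HF.
Qed.
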